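(* Let $I\subset\mathbb{R}$ be an open interval, $W\subset I$ a countable dense subset, $\mathrm{gr}\colon W\to\mathbb{N}$ a grading with finite fibers, and $K>1$. Then the division metric $d$ with steepness $K$ is a metric on the fractured interval $\check I$ which induces the topology of $\check I$.
   Context: The divided interval of $I$ at $W$ is $\hat I = \{w^{L}, \hat w, w^{R} : w\in W\}\sqcup (I\smallsetminus W)$, with $\pi\colon\hat I\to I$ sending $w^L,\hat w,w^R$ to $w$ and fixing $I\smallsetminus W$, totally ordered so that $\pi$ is order preserving and $w^L<\hat w<w^R$. For $a,b\in\hat I\cup\{\pm\infty\}$, $(a,b)=\{s: a<s<b\}$; basis intervals are the nonempty $(a,b)$ other than those with $a=w^L$ or $b=w^R$, and they generate the topology of $\hat I$. The fractured interval is $\check I=\hat I\smallsetminus\{\hat w:w\in W\}$ with the subspace topology. The height of $\hat w$ ($w\in W$) is $K^{-\mathrm{gr}(w)}$, and every other point of $\hat I$ has height $0$. The division metric is $d(a,a)=0$ and, for $a<b$ in $\check I$, $d(a,b)=d(b,a)$ is the maximum height of the points of $(a,b)\subset\hat I$. *)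

(* Defs.v *)
From Stdlib Require Import Reals List ClassicalEpsilon.
Open Scope R_scope.

(* Open interval (lo, hi) of R; None encodes -oo (for lo) / +oo (for hi). *)
Definition ointerval (lo hi : option R) (x : R) : Prop :=
  (match lo with Some a => a < x | None => True end) /\
  (match hi with Some b => x < b | None => True end).

(* Points of the divided interval are encoded as pairs (x, t) with x in I:
   (w, TL) = w^L, (w, TM) = \hat w, (w, TR) = w^R for w in W,
   and (x, TM) = x for x in I \ W.  pi = fst. *)
Inductive tag := TL | TM | TR.

Definition tag_lt (t u : tag) : Prop :=
  match t, u with
  | TL, TM | TL, TR | TM, TR => True
  | _, _ => False
  end.

Definition pt := (R * tag)%type.

Definition plt (a b : pt) : Prop :=
  fst a < fst b \/ (fst a = fst b /\ tag_lt (snd a) (snd b)).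

Section Divided.
Variables (I W : R -> Prop) (gr : R -> nat) (K : R).

Definition inHat (p : pt) : Prop := I (fst p) /\ (W (fst p) \/ snd p = TM).

Definition inCheck (p : pt) : Prop := inHat p /\ ~ (W (fst p) /\ snd p = TM).

Definition height (p : pt) : R :=
  if excluded_middle_informative (W (fst p) /\ snd p = TM)
  then / (K ^ gr (fst p)) else 0.

Inductive ext := NegInf | Fin (p : pt) | PosInf.

Definition ext_ok (a : ext) : Prop :=
  match a with Fin p => inHat p | _ => True end.

Definition above (a : ext) (s : pt) : Prop :=
  match a with NegInf => True | Fin p => plt p s | PosInf => False end.

Definition below (b : ext) (s : pt) : Prop :=
  match b with NegInf => False | Fin p => plt s p | PosInf => True end.

Definition ointv (a b : ext) (s : pt) : Prop := inHat s /\ above a s /\ below b s.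

Definition basis_interval (S : pt -> Prop) : Prop :=
  exists a b : ext,
    ext_ok a /\ ext_ok b /\ (exists s, ointv a b s) /\
    (forall w, a <> Fin (w, TL)) /\ (forall w, b <> Fin (w, TR)) /\
    (forall s, S s <-> ointv a b s).

(* topology on \hat I generated by the basis intervals:
   U is open iff each of its points lies in a finite intersection
   of basis intervals (computed inside \hat I) contained in U. *)
Definition hat_open (U : pt -> Prop) : Prop :=
  (forall s, U s -> inHat s) /\
  forall s, U s -> exists Bs : list (pt -> Prop),
    Forall basis_interval Bs /\ Forall (fun B => B s) Bs /\
    (forall t, inHat t -> Forall (fun B => B t) Bs -> U t).

Definition check_open (V : pt -> Prop) : Prop :=
  exists U, hat_open U /\ forall s, V s <-> (U s /\ inCheck s).

Definition max_height (a b : pt) : R :=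
  epsilon (inhabits 0)
    (fun m => (exists s, ointv (Fin a) (Fin b) s /\ height s = m) /\
              (forall s, ointv (Fin a) (Fin b) s -> height s <= m)).

Definition division_metric (a b : pt) : R :=
  if excluded_middle_informative (a = b) then 0
  else if excluded_middle_informative (plt a b) then max_height a b
  else max_height b a.

End Divided.

Definition is_metric_on (X : pt -> Prop) (d : pt -> pt -> R) : Prop :=
  forall x y z, X x -> X y -> X z ->
    0 <= d x y /\ (d x y = 0 <-> x = y) /\ d x y = d y x /\
    d x z <= d x y + d y z.

Definition metric_open (X : pt -> Prop) (d : pt -> pt -> R) (V : pt -> Prop) : Prop :=
  (forall s, V s -> X s) /\
  forall s, V s -> exists e, 0 < e /\ forall t, X t -> d s t < e -> V t.

(* Main.v *)
Require Import Defs.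
From Stdlib Require Import Reals List.
Open Scope R_scope.
From Stdlib Require Import Lra Lia Classical ClassicalEpsilon.

Lemma plt_irrefl a : ~ plt a a.
Proof. destruct a as [x t]; unfold plt; simpl; intros [H|[_ H]]; [lra| destruct t; exact H]. Qed.

Lemma plt_trans a b c : plt a b -> plt b c -> plt a c.
Proof.
  destruct a as [x t], b as [y u], c as [z v]; unfold plt; simpl.
  intros [H|[-> H]] [H'|[-> H']]; try (left; lra).
  right; split; auto; destruct t,u,v; simpl in *; tauto.
Qed.

Lemma plt_total a b : a = b \/ plt a b \/ plt b a.
Proof.
  destruct a as [x t], b as [y u]; unfold plt; simpl.
  destruct (Rtotal_order x y) as [H|[->|H]]; auto.
  destruct t, u; simpl; auto 10.
Qed.

Lemma plt_asym a b : plt a b -> ~ plt b a.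
Proof. intros H H'. apply (plt_irrefl a). eapply plt_trans; eauto. Qed.

Lemma hat_in (I W : R -> Prop) v : (forall w, W w -> I w) -> W v -> inHat I W (v,TM).
Proof. intros H Wv; split; simpl; auto. Qed.

Lemma between_hat (I W : R -> Prop) a b :
  (forall w, W w -> I w) ->
  (forall x y, I x -> I y -> x < y -> exists w, W w /\ x < w < y) ->
  inCheck I W a -> inCheck I W b -> plt a b ->
  exists v, W v /\ ointv I W (Fin a) (Fin b) (v,TM).
Proof.
  intros HWI Hd [[Ia Ha] Ca] [[Ib Hb] Cb] [H|[E H]].
  - destruct (Hd _ _ Ia Ib H) as [w [Ww Hw]]. exists w; split; auto.
    split; [apply hat_in; auto|]. simpl; unfold plt; simpl; split; left; lra.
  - destruct a as [x t], b as [y u]; simpl in *; subst y.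
    exists x. destruct t, u; simpl in H; try contradiction.
    + destruct Ha as [Ha|Ha]; [|discriminate]. exfalso; tauto.
    + destruct Ha as [Ha|Ha]; [|discriminate].
      split; auto. split; [apply hat_in; auto|]. simpl; unfold plt; simpl; split; right; auto.
    + destruct Hb as [Hb|Hb]; [|discriminate]. exfalso; tauto.
Qed.

Lemma lower_hat (I W : R -> Prop) p s :
  (forall w, W w -> I w) ->
  (forall x y, I x -> I y -> x < y -> exists w, W w /\ x < w < y) ->
  inHat I W p -> inCheck I W s -> plt p s -> (forall w, p <> (w,TL)) ->
  exists v, W v /\ (p = (v,TM) \/ plt p (v,TM)) /\ plt (v,TM) s.
Proof.
  intros HWI Hd [Ip Hp] [[Is Hs] Cs] [H|[E H]] NL.
  - destruct (Hd _ _ Ip Is H) as [w [Ww Hw]]. exists w; split; auto.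
    unfold plt; simpl; split; [right; left; simpl; lra | left; simpl; lra].
  - destruct p as [x t], s as [y u]; simpl in *; subst y.
    exists x. destruct t, u; simpl in H; try contradiction.
    + exfalso; apply (NL x); auto.
    + exfalso; apply (NL x); auto.
    + destruct Hs as [Hs|Hs]; [|discriminate]. split; auto. split; auto.
      unfold plt; simpl; right; auto.
Qed.

Lemma upper_hat (I W : R -> Prop) q s :
  (forall w, W w -> I w) ->
  (forall x y, I x -> I y -> x < y -> exists w, W w /\ x < w < y) ->
  inHat I W q -> inCheck I W s -> plt s q -> (forall w, q <> (w,TR)) ->
  exists v, W v /\ (q = (v,TM) \/ plt (v,TM) q) /\ plt s (v,TM).
Proof.
  intros HWI Hd [Iq Hq] [[Is Hs] Cs] [H|[E H]] NR.
  - destruct (Hd _ _ Is Iq H) as [w [Ww Hw]]. exists w; split; auto.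
    unfold plt; simpl; split; [right; left; simpl; lra | left; simpl; lra].
  - destruct q as [x t], s as [y u]; simpl in *; subst y.
    exists x. destruct u, t; simpl in H; try contradiction.
    + destruct Hs as [Hs|Hs]; [|discriminate]. split; auto. split; auto.
      unfold plt; simpl; right; auto.
    + exfalso; apply (NR x); auto.
    + destruct Hq as [Hq|Hq]; [|discriminate]. exfalso; tauto.
Qed.

Lemma height_nonneg (I W : R -> Prop) gr K s : 0 < K -> 0 <= height W gr K s.
Proof.
  intros HK; unfold height. destruct (excluded_middle_informative _); [|lra].
  left; apply Rinv_0_lt_compat, pow_lt; auto.
Qed.

Lemma height_check (I W : R -> Prop) gr K s : inCheck I W s -> height W gr K s = 0.
Proof.
  intros [_ C]; unfold height. destruct (excluded_middle_informative _); tauto.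
Qed.

Lemma height_hat (W : R -> Prop) gr K v : W v -> height W gr K (v,TM) = / K ^ gr v.
Proof.
  intros Wv; unfold height. destruct (excluded_middle_informative _); simpl in *; tauto.
Qed.

Lemma height_pos_inv (W : R -> Prop) gr K s : 0 < height W gr K s ->
  W (fst s) /\ s = (fst s, TM) /\ height W gr K s = / K ^ gr (fst s).
Proof.
  unfold height. destruct (excluded_middle_informative _) as [[H1 H2]|]; [|lra].
  intros; destruct s; simpl in *; subst; auto.
Qed.

Lemma min_nat (S : nat -> Prop) n : S n -> exists n0, S n0 /\ forall m, S m -> (n0 <= m)%nat.
Proof.
  induction n as [n IH] using (well_founded_induction Wf_nat.lt_wf). intros Sn.
  destruct (classic (exists m, (m < n)%nat /\ S m)) as [[m [Hm Sm]]|Hn].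
  - exact (IH m Hm Sm).
  - exists n; split; auto. intros m Sm. destruct (Nat.lt_ge_cases m n); auto.
    exfalso; apply Hn; eauto.
Qed.

Definition MHP (I W : R -> Prop) gr K a b m :=
  (exists s, ointv I W (Fin a) (Fin b) s /\ height W gr K s = m) /\
  (forall s, ointv I W (Fin a) (Fin b) s -> height W gr K s <= m).

Lemma max_height_spec (I W : R -> Prop) gr K a b :
  (forall w, W w -> I w) ->
  (forall x y, I x -> I y -> x < y -> exists w, W w /\ x < w < y) ->
  1 < K ->
  inCheck I W a -> inCheck I W b -> plt a b ->
  MHP I W gr K a b (max_height I W gr K a b) /\ 0 < max_height I W gr K a b.
Proof.
  intros HWI Hd HK Ca Cb Hab.
  destruct (between_hat I W a b HWI Hd Ca Cb Hab) as [v [Wv Hv]].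
  set (S := fun n => exists v, W v /\ ointv I W (Fin a) (Fin b) (v,TM) /\ gr v = n).
  destruct (min_nat S (gr v)) as [n0 [[v0 [Wv0 [Hv0 Gv0]]] Hmin]]. { exists v; auto. }
  assert (Hex : exists m, MHP I W gr K a b m).
  { exists (/ K ^ n0). split.
    - exists (v0,TM); split; auto. rewrite height_hat; subst; auto.
    - intros s Hs. destruct (Rlt_or_le 0 (height W gr K s)) as [Hp|Hp].
      + destruct (height_pos_inv W gr K s Hp) as [Ws [Es Hh]]. rewrite Hh.
        apply Rinv_le_contravar. apply pow_lt; lra.
        apply Rle_pow; [lra|]. apply Hmin. exists (fst s); split; auto. split; auto.
        rewrite <- Es; auto.
      + apply Rle_trans with 0; auto. left; apply Rinv_0_lt_compat, pow_lt; lra. }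
  assert (HM : MHP I W gr K a b (max_height I W gr K a b)).
  { unfold max_height. apply (epsilon_spec (inhabits 0) (fun m => MHP I W gr K a b m)) ; auto. }
  split; auto.
  destruct HM as [_ HM]. specialize (HM _ Hv). rewrite height_hat in HM; auto.
  apply Rlt_le_trans with (/ K ^ gr v); auto. apply Rinv_0_lt_compat, pow_lt; lra.
Qed.

Definition btw (I W : R -> Prop) x y s := ointv I W (Fin x) (Fin y) s \/ ointv I W (Fin y) (Fin x) s.

Lemma dist_self I W gr K x : division_metric I W gr K x x = 0.
Proof. unfold division_metric; destruct (excluded_middle_informative _); tauto. Qed.

Lemma dist_sym I W gr K x y : division_metric I W gr K x y = division_metric I W gr K y x.
Proof.
  unfold division_metric.
  destruct (excluded_middle_informative (x = y)) as [e1|n1];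
  destruct (excluded_middle_informative (y = x)) as [e2|n2]; try congruence; auto.
  destruct (excluded_middle_informative (plt x y)) as [p1|p1];
  destruct (excluded_middle_informative (plt y x)) as [p2|p2]; auto.
  - exfalso; exact (plt_asym _ _ p1 p2).
  - destruct (plt_total x y) as [|[|]]; tauto.
Qed.

Lemma btw_self I W x s : ~ btw I W x x s.
Proof. intros [[_ [A B]]|[_ [A B]]]; simpl in *; exact (plt_asym _ _ A B). Qed.

Lemma dist_spec (I W : R -> Prop) gr K x y :
  (forall w, W w -> I w) ->
  (forall x y, I x -> I y -> x < y -> exists w, W w /\ x < w < y) ->
  1 < K -> inCheck I W x -> inCheck I W y -> x <> y ->
  (exists s, btw I W x y s /\ height W gr K s = division_metric I W gr K x y) /\
  (forall s, btw I W x y s -> height W gr K s <= division_metric I W gr K x y) /\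
  0 < division_metric I W gr K x y.
Proof.
  intros HWI Hd HK Cx Cy nxy.
  destruct (plt_total x y) as [|[p|p]]; [tauto| |].
  - assert (E : division_metric I W gr K x y = max_height I W gr K x y).
    { unfold division_metric. destruct (excluded_middle_informative _); [tauto|].
      destruct (excluded_middle_informative _); tauto. }
    rewrite E. destruct (max_height_spec I W gr K x y HWI Hd HK Cx Cy p) as [[[s [H1 H2]] H3] H4].
    split; [exists s; split; [left|]; auto|]. split; auto.
    intros t [Ht|Ht]; auto. exfalso. destruct Ht as [_ [A B]]; simpl in *.
    apply (plt_asym _ _ p). eapply plt_trans; eauto.
  - rewrite dist_sym.
    assert (E : division_metric I W gr K y x = max_height I W gr K y x).
    { unfold division_metric. destruct (excluded_middle_informative _); [congruence|].
      destruct (excluded_middle_informative _); tauto. }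
    rewrite E. destruct (max_height_spec I W gr K y x HWI Hd HK Cy Cx p) as [[[s [H1 H2]] H3] H4].
    split; [exists s; split; [right|]; auto|]. split; auto.
    intros t [Ht|Ht]; auto. exfalso. destruct Ht as [_ [A B]]; simpl in *.
    apply (plt_asym _ _ p). eapply plt_trans; eauto.
Qed.

Lemma le_dist (I W : R -> Prop) gr K x y s :
  (forall w, W w -> I w) ->
  (forall x y, I x -> I y -> x < y -> exists w, W w /\ x < w < y) ->
  1 < K -> inCheck I W x -> inCheck I W y -> btw I W x y s ->
  height W gr K s <= division_metric I W gr K x y.
Proof.
  intros HWI Hd HK Cx Cy B. destruct (classic (x = y)) as [->|n].
  - exfalso; exact (btw_self _ _ _ _ B).
  - apply (dist_spec I W gr K x y HWI Hd HK Cx Cy n); auto.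
Qed.

Lemma dist_nonneg (I W : R -> Prop) gr K x y :
  (forall w, W w -> I w) ->
  (forall x y, I x -> I y -> x < y -> exists w, W w /\ x < w < y) ->
  1 < K -> inCheck I W x -> inCheck I W y -> 0 <= division_metric I W gr K x y.
Proof.
  intros HWI Hd HK Cx Cy. destruct (classic (x = y)) as [->|n].
  - rewrite dist_self; lra.
  - left; apply (dist_spec I W gr K x y HWI Hd HK Cx Cy n).
Qed.

Lemma btw_split (I W : R -> Prop) x y z s : btw I W x z s ->
  s = y \/ btw I W x y s \/ btw I W y z s.
Proof.
  intros [[Hs [A B]]|[Hs [A B]]]; simpl in *;
  destruct (plt_total s y) as [|[p|p]]; auto; right.
  - left; left; split; auto.
  - right; left; split; auto.
  - right; right; split; auto.
  - left; right; split; auto.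
Qed.

Lemma triangle (I W : R -> Prop) gr K x y z :
  (forall w, W w -> I w) ->
  (forall x y, I x -> I y -> x < y -> exists w, W w /\ x < w < y) ->
  1 < K -> inCheck I W x -> inCheck I W y -> inCheck I W z ->
  division_metric I W gr K x z <= division_metric I W gr K x y + division_metric I W gr K y z.
Proof.
  intros HWI Hd HK Cx Cy Cz.
  pose proof (dist_nonneg I W gr K x y HWI Hd HK Cx Cy).
  pose proof (dist_nonneg I W gr K y z HWI Hd HK Cy Cz).
  destruct (classic (x = z)) as [->|n]. { rewrite dist_self; lra. }
  destruct (dist_spec I W gr K x z HWI Hd HK Cx Cz n) as [[s [Bs Hs]] _].
  rewrite <- Hs.
  destruct (btw_split I W x y z s Bs) as [->|[B|B]].
  - rewrite (height_check I W gr K y Cy); lra.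
  - pose proof (le_dist I W gr K x y s HWI Hd HK Cx Cy B); lra.
  - pose proof (le_dist I W gr K y z s HWI Hd HK Cy Cz B); lra.
Qed.

Lemma lower_ball (I W : R -> Prop) gr K a s :
  (forall w, W w -> I w) ->
  (forall x y, I x -> I y -> x < y -> exists w, W w /\ x < w < y) ->
  1 < K -> ext_ok I W a -> (forall w, a <> Fin (w,TL)) -> inCheck I W s -> above a s ->
  exists e, 0 < e /\ forall t, inCheck I W t -> division_metric I W gr K s t < e -> above a t.
Proof.
  intros HWI Hd HK Ha NL Cs As.
  destruct a as [|p|]; simpl in *.
  - exists 1; split; auto; lra.
  - assert (NL' : forall w, p <> (w,TL)) by (intros w E; apply (NL w); congruence).
    destruct (lower_hat I W p s HWI Hd Ha Cs As NL') as [v [Wv [Hp Hvs]]].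
    exists (/ K ^ gr v); split. { apply Rinv_0_lt_compat, pow_lt; lra. }
    intros t Ct Hdt.
    assert (plt (v,TM) t).
    { destruct (plt_total (v,TM) t) as [E|[P|P]]; auto.
      - exfalso. destruct Ct as [_ Ct]. apply Ct; rewrite <- E; simpl; auto.
      - exfalso. assert (B : btw I W s t (v,TM)).
        { right. split; [apply hat_in; auto|]. simpl; auto. }
        pose proof (le_dist I W gr K s t _ HWI Hd HK Cs Ct B).
        rewrite height_hat in H; auto. lra. }
    destruct Hp as [->|Hp]; auto. eapply plt_trans; eauto.
  - contradiction.
Qed.

Lemma upper_ball (I W : R -> Prop) gr K b s :
  (forall w, W w -> I w) ->
  (forall x y, I x -> I y -> x < y -> exists w, W w /\ x < w < y) ->
  1 < K -> ext_ok I W b -> (forall w, b <> Fin (w,TR)) -> inCheck I W s -> below b s ->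
  exists e, 0 < e /\ forall t, inCheck I W t -> division_metric I W gr K s t < e -> below b t.
Proof.
  intros HWI Hd HK Hb NR Cs Bs.
  destruct b as [|q|]; simpl in *.
  - contradiction.
  - assert (NR' : forall w, q <> (w,TR)) by (intros w E; apply (NR w); congruence).
    destruct (upper_hat I W q s HWI Hd Hb Cs Bs NR') as [v [Wv [Hq Hvs]]].
    exists (/ K ^ gr v); split. { apply Rinv_0_lt_compat, pow_lt; lra. }
    intros t Ct Hdt.
    assert (plt t (v,TM)).
    { destruct (plt_total (v,TM) t) as [E|[P|P]]; auto.
      - exfalso. destruct Ct as [_ Ct]. apply Ct; rewrite <- E; simpl; auto.
      - exfalso. assert (B : btw I W s t (v,TM)).
        { left. split; [apply hat_in; auto|]. simpl; auto. }
        pose proof (le_dist I W gr K s t _ HWI Hd HK Cs Ct B).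
        rewrite height_hat in H; auto. lra. }
    destruct Hq as [->|Hq]; auto. eapply plt_trans; eauto.
  - exists 1; split; auto; lra.
Qed.

Lemma basis_ball (I W : R -> Prop) gr K B s :
  (forall w, W w -> I w) ->
  (forall x y, I x -> I y -> x < y -> exists w, W w /\ x < w < y) ->
  1 < K -> basis_interval I W B -> inCheck I W s -> B s ->
  exists e, 0 < e /\ forall t, inCheck I W t -> division_metric I W gr K s t < e -> B t.
Proof.
  intros HWI Hd HK [a [b [Ha [Hb [_ [NL [NR HB]]]]]]] Cs Bs0.
  apply HB in Bs0. destruct Bs0 as [_ [As Bs]].
  destruct (lower_ball I W gr K a s HWI Hd HK Ha NL Cs As) as [e1 [He1 H1]].
  destruct (upper_ball I W gr K b s HWI Hd HK Hb NR Cs Bs) as [e2 [He2 H2]].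
  exists (Rmin e1 e2); split. { apply Rmin_glb_lt; auto. }
  intros t Ct Hdt. apply HB. split; [apply Ct|].
  split; [apply H1 | apply H2]; auto;
  eapply Rlt_le_trans; eauto; [apply Rmin_l | apply Rmin_r].
Qed.

Lemma list_ball (I W : R -> Prop) gr K Bs s :
  (forall w, W w -> I w) ->
  (forall x y, I x -> I y -> x < y -> exists w, W w /\ x < w < y) ->
  1 < K -> Forall (basis_interval I W) Bs -> inCheck I W s -> Forall (fun B => B s) Bs ->
  exists e, 0 < e /\ forall t, inCheck I W t -> division_metric I W gr K s t < e ->
    Forall (fun B => B t) Bs.
Proof.
  intros HWI Hd HK HB Cs Hs. induction Bs as [|B Bs IH].
  - exists 1; split; [lra|]; auto.
  - inversion HB as [|? ? HB1 HB2]; inversion Hs as [|? ? Hs1 Hs2]; subst.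
    destruct IH as [e1 [He1 G1]]; auto.
    destruct (basis_ball I W gr K B s HWI Hd HK) as [e2 [He2 G2]]; auto.
    exists (Rmin e1 e2); split. { apply Rmin_glb_lt; auto. }
    intros t Ct Hdt. constructor.
    + apply G2; auto. eapply Rlt_le_trans; eauto; apply Rmin_r.
    + apply G1; auto. eapply Rlt_le_trans; eauto; apply Rmin_l.
Qed.

Lemma above_trans a x z : above a x -> plt x z -> above a z.
Proof. destruct a; simpl; auto; intros; eapply plt_trans; eauto. Qed.
Lemma below_trans b x z : below b x -> plt z x -> below b z.
Proof. destruct b; simpl; auto; intros; eapply plt_trans; eauto. Qed.

Lemma convex I W a b x y z : ointv I W a b x -> ointv I W a b y -> btw I W x y z -> ointv I W a b z.
Proof.
  intros [_ [Ax Bx]] [_ [Ay By]] [[Hz [P Q]]|[Hz [P Q]]]; simpl in *.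
  - split; [auto|split]; [exact (above_trans _ _ _ Ax P)|exact (below_trans _ _ _ By Q)].
  - split; [auto|split]; [exact (above_trans _ _ _ Ay P)|exact (below_trans _ _ _ Bx Q)].
Qed.

Lemma list_max (L : list R) (P : R -> Prop) : (exists x, In x L /\ P x) ->
  exists m, In m L /\ P m /\ forall x, In x L -> P x -> x <= m.
Proof.
  induction L as [|y L IH]; intros [x [Hx Px]]; [destruct Hx|].
  destruct (classic (exists x, In x L /\ P x)) as [E|NE].
  - destruct (IH E) as [m [Hm [Pm Mm]]].
    destruct (classic (P y /\ m <= y)) as [[Py Hy]|Ny].
    + exists y; split; [left; auto|]; split; auto. intros z [<-|Hz] Pz; [lra|].
      specialize (Mm z Hz Pz); lra.
    + exists m; split; [right; auto|]; split; auto. intros z Hz Pz. destruct Hz as [Ez|Hz]; [subst z|auto].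
      destruct (Rle_lt_dec y m); auto. exfalso; apply Ny; split; auto; lra.
  - destruct Hx as [Ex|Hx]; [subst x|exfalso; eauto].
    exists y; split; [left; auto|]; split; auto. intros z Hz Pz. destruct Hz as [Ez|Hz]; [subst; lra|].
    exfalso; eauto.
Qed.

Lemma list_min (L : list R) (P : R -> Prop) : (exists x, In x L /\ P x) ->
  exists m, In m L /\ P m /\ forall x, In x L -> P x -> m <= x.
Proof.
  intros [x [Hx Px]].
  destruct (list_max (map Ropp L) (fun y => P (- y))) as [m [Hm [Pm Mm]]].
  { exists (- x); split; [apply in_map; auto|]. rewrite Ropp_involutive; auto. }
  exists (- m). apply in_map_iff in Hm. destruct Hm as [y [<- Hy]].
  rewrite Ropp_involutive. split; auto. split; [rewrite Ropp_involutive in Pm; auto|].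
  intros z Hz Pz. assert (- z <= - y). { apply Mm. apply in_map; auto. rewrite Ropp_involutive; auto. }
  lra.
Qed.

Lemma grade_list (W : R -> Prop) (gr : R -> nat) :
  (forall n : nat, exists l : list R, forall w, W w -> gr w = n -> In w l) ->
  forall N, exists L, forall w, W w -> (gr w < N)%nat -> In w L.
Proof.
  intros Hf N; induction N as [|N [L HL]].
  - exists nil; intros; lia.
  - destruct (Hf N) as [l Hl]. exists (l ++ L). intros w Ww Hw. apply in_or_app.
    destruct (Nat.eq_dec (gr w) N); [left; auto | right; apply HL; auto; lia].
Qed.

Lemma big_bound K e : 1 < K -> 0 < e -> exists N, forall n, e <= / K ^ n -> (n < N)%nat.
Proof.
  intros HK He. destruct (Pow_x_infinity K) with (b := / e + 1) as [N HN].
  { rewrite Rabs_pos_eq; lra. }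
  exists N. intros n Hn. destruct (Nat.lt_ge_cases n N) as [|Hge]; auto. exfalso.
  specialize (HN n Hge). rewrite Rabs_pos_eq in HN by (left; apply pow_lt; lra).
  assert (Kp : 0 < K ^ n) by (apply pow_lt; lra).
  assert (/ K ^ n < e).
  { rewrite <- (Rinv_inv e). apply Rinv_lt_contravar.
    - apply Rmult_lt_0_compat; auto. apply Rinv_0_lt_compat; auto.
    - lra. }
  lra.
Qed.

Lemma hat_plt v u : plt (v,TM) (u,TM) -> v < u.
Proof. unfold plt; simpl; intros [H|[_ H]]; auto; contradiction. Qed.

Lemma nbhd (I W : R -> Prop) gr K s e :
  (forall w, W w -> I w) ->
  (forall x y, I x -> I y -> x < y -> exists w, W w /\ x < w < y) ->
  (forall n : nat, exists l : list R, forall w, W w -> gr w = n -> In w l) ->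
  1 < K -> inCheck I W s -> 0 < e ->
  exists B, basis_interval I W B /\ B s /\
    forall t, inCheck I W t -> B t -> division_metric I W gr K s t < e.
Proof.
  intros HWI Hd Hf HK Cs He.
  destruct (big_bound K e HK He) as [N HN].
  destruct (grade_list W gr Hf N) as [L HL].
  assert (HB : forall v, W v -> e <= / K ^ gr v -> In v L) by (intros; apply HL; auto).
  assert (LA : exists a, ext_ok I W a /\ (forall w, a <> Fin (w,TL)) /\ above a s /\
     (forall v, W v -> e <= / K ^ gr v -> plt (v,TM) s -> ~ above a (v,TM))).
  { destruct (classic (exists v, In v L /\ (W v /\ e <= / K ^ gr v /\ plt (v,TM) s))) as [E|NE].
    - destruct (list_max L _ E) as [m [Hm [[Wm [Em Pm]] Mm]]].
      exists (Fin (m,TM)). split; [apply hat_in; auto|]. split; [intros w Ew; discriminate|].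
      split; [simpl; auto|]. intros v Wv Ev Pv Av. simpl in Av.
      apply hat_plt in Av. specialize (Mm v (HB v Wv Ev) (conj Wv (conj Ev Pv))). lra.
    - exists NegInf. split; [simpl; auto|]. split; [intros w Ew; discriminate|].
      split; [simpl; auto|]. intros v Wv Ev Pv _. apply NE. exists v; auto. }
  assert (LB : exists b, ext_ok I W b /\ (forall w, b <> Fin (w,TR)) /\ below b s /\
     (forall v, W v -> e <= / K ^ gr v -> plt s (v,TM) -> ~ below b (v,TM))).
  { destruct (classic (exists v, In v L /\ (W v /\ e <= / K ^ gr v /\ plt s (v,TM)))) as [E|NE].
    - destruct (list_min L _ E) as [m [Hm [[Wm [Em Pm]] Mm]]].
      exists (Fin (m,TM)). split; [apply hat_in; auto|]. split; [intros w Ew; discriminate|].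
      split; [simpl; auto|]. intros v Wv Ev Pv Av. simpl in Av.
      apply hat_plt in Av. specialize (Mm v (HB v Wv Ev) (conj Wv (conj Ev Pv))). lra.
    - exists PosInf. split; [simpl; auto|]. split; [intros w Ew; discriminate|].
      split; [simpl; auto|]. intros v Wv Ev Pv _. apply NE. exists v; auto. }
  destruct LA as [a [Ha [NL [As Ma]]]].
  destruct LB as [b [Hb [NR [Bs Mb]]]].
  assert (Os : ointv I W a b s) by (split; [apply Cs|]; auto).
  exists (ointv I W a b). split.
  { exists a, b. split; [auto| split; [auto| split; [exists s; auto| split; [auto| split; [auto| intros; tauto]]]]]. }
  split; auto.
  intros t Ct Ot. destruct (classic (s = t)) as [<-|n]. { rewrite dist_self; lra. }
  destruct (dist_spec I W gr K s t HWI Hd HK Cs Ct n) as [[s0 [B0 H0]] [_ Dp]].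
  destruct (Rlt_or_le (division_metric I W gr K s t) e) as [|Hge]; auto. exfalso.
  rewrite <- H0 in Hge, Dp.
  destruct (height_pos_inv W gr K s0 Dp) as [Ws0 [Es0 Hh]].
  rewrite Hh in Hge.
  assert (O0 : ointv I W a b s0) by (exact (convex I W a b s t s0 Os Ot B0)).
  rewrite Es0 in O0. destruct O0 as [_ [A0 B0']].
  destruct (plt_total s (fst s0, TM)) as [E|[P|P]].
  - destruct Cs as [_ Cs]. apply Cs. rewrite E; simpl; auto.
  - exact (Mb _ Ws0 Hge P B0').
  - exact (Ma _ Ws0 Hge P A0).
Qed.

Theorem mainTheorem8 (lo hi : option R) (W : R -> Prop) (gr : R -> nat) (K : R) :
  (forall w, W w -> ointerval lo hi w) ->
  (exists f : nat -> R, forall w, W w -> exists n, f n = w) ->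
  (forall x y, ointerval lo hi x -> ointerval lo hi y -> x < y ->
     exists w, W w /\ x < w < y) ->
  (forall n : nat, exists l : list R, forall w, W w -> gr w = n -> In w l) ->
  1 < K ->
  is_metric_on (inCheck (ointerval lo hi) W)
               (division_metric (ointerval lo hi) W gr K) /\
  (forall V : pt -> Prop,
     metric_open (inCheck (ointerval lo hi) W)
                 (division_metric (ointerval lo hi) W gr K) V
     <-> check_open (ointerval lo hi) W V).
Proof.
  intros HWI _ Hd Hf HK. split.
  - intros x y z Cx Cy Cz. split; [apply dist_nonneg; auto|].
    split; [split|split; [apply dist_sym|apply triangle; auto]].
    + intros E. destruct (classic (x = y)) as [|n]; auto.
      destruct (dist_spec _ W gr K x y HWI Hd HK Cx Cy n) as [_ [_ P]]. lra.
    + intros <-. apply dist_self.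
  - intros V; split.
    + intros [HX HV].
      exists (fun s => exists B, basis_interval (ointerval lo hi) W B /\ B s /\
                 forall t, inCheck (ointerval lo hi) W t -> B t -> V t).
      split.
      * split.
        -- intros s [B [[a [b [_ [_ [_ [_ [_ HB]]]]]]] [Bs _]]]. apply HB in Bs; apply Bs.
        -- intros s [B [HBi [Bs HBV]]]. exists (B :: nil).
           split; [constructor; auto|]. split; [constructor; auto|].
           intros t Ht Ft. inversion Ft; subst. exists B; auto.
      * intros s; split.
        -- intros Vs. split; [|apply HX; auto].
           destruct (HV s Vs) as [e [He Hb]].
           destruct (nbhd _ W gr K s e HWI Hd Hf HK (HX s Vs) He) as [B [HBi [Bs HBd]]].
           exists B. split; [auto|]. split; [auto|]. intros t Ct Bt. apply Hb; auto.
        -- intros [[B [_ [Bs HBV]]] Cs]. apply HBV; auto.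
    + intros [U [[HUh HUo] HUV]]. split.
      * intros s Vs; apply HUV in Vs; tauto.
      * intros s Vs. apply HUV in Vs as [Us Cs].
        destruct (HUo s Us) as [Bs [FB [Fs HU]]].
        destruct (list_ball _ W gr K Bs s HWI Hd HK FB Cs Fs) as [e [He He']].
        exists e. split; auto. intros t Ct Hdt. apply HUV. split; auto.
        apply HU; [apply Ct|]. apply He'; auto.
Qed.
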